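(* Let $G$ be a maximal outerplanar graph. Then $G$ is in $B_0$ if and only if $G$ does not contain an induced subgraph isomorphic to $S_3$.
   Context: A graph is maximal outerplanar if it is outerplanar and adding any single new edge yields a non-outerplanar graph. $S_3$ is the graph with vertices $x_1,x_2,x_3,y_1,y_2,y_3$ and edges $\{x_1,x_2\},\{x_1,x_3\},\{x_2,x_3\},\{x_1,y_1\},\{x_2,y_1\},\{x_2,y_2\},\{x_3,y_2\},\{x_3,y_3\},\{x_1,y_3\}$. An EPG representation of a graph is a set of paths on a rectangular grid (sequences of grid points joined consecutively by grid edges), one per vertex, such that two vertices are adjacent iff their paths share a grid edge. $B_0$ is the class of graphs having an EPG representation in which no path has a bend (every path lies on a single grid line). *)

(* Defs.v *)
From HB Require Import structures.
From mathcomp Require Import all_boot all_order all_algebra.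
Set Implicit Arguments. Unset Strict Implicit. Unset Printing Implicit Defensive.
Import Order.TTheory GRing.Theory Num.Theory.

Definition simple_graph (T : finType) (e : rel T) : Prop :=
  symmetric e /\ irreflexive e.

(* Outerplanarity, combinatorially: the vertices can be placed in some
   cyclic (here: linear) order on a circle such that no two edges cross
   as chords, i.e. there are no edges ab, cd with a < c < b < d. *)
Definition outerplanar (T : finType) (e : rel T) : Prop :=
  exists pos : T -> nat, injective pos /\
    forall a b c d : T, e a b -> e c d ->
      ~ (pos a < pos c /\ pos c < pos b /\ pos b < pos d)%N.

Definition add_edge (T : finType) (e : rel T) (x y : T) : rel T :=
  fun u v => [|| e u v, (u == x) && (v == y) | (u == y) && (v == x)].

Definition maximal_outerplanar (T : finType) (e : rel T) : Prop :=
  outerplanar e /\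
  forall x y : T, x != y -> ~~ e x y -> ~ outerplanar (add_edge e x y).

(* S_3 on vertex set 'I_6: x1,x2,x3 = 0,1,2 ; y1,y2,y3 = 3,4,5. *)
Definition S3_edges : seq (nat * nat) :=
  [:: (0,1); (0,2); (1,2); (0,3); (1,3); (1,4); (2,4); (2,5); (0,5)]%N.

Definition S3 : rel 'I_6 :=
  fun i j => ((val i, val j) \in S3_edges) || ((val j, val i) \in S3_edges).

Definition has_induced_S3 (T : finType) (e : rel T) : Prop :=
  exists f : 'I_6 -> T, injective f /\ forall i j, e (f i) (f j) = S3 i j.

(* A path without bends on the integer grid: it lies on a horizontal
   (horiz = true, line y = line) or vertical (x = line) grid line and
   consists of the consecutive grid points lo, lo+1, ..., hi along it,
   with lo < hi (at least one grid edge).  Its grid edges are the unit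
   segments [k, k+1] with lo <= k < hi on that line. *)
Record segpath := SegPath { horiz : bool; line : int; lo : int; hi : int }.

Definition seg_valid (p : segpath) : bool := (lo p < hi p)%R.

Definition share_edge (p q : segpath) : bool :=
  [&& horiz p == horiz q, line p == line q &
      (Num.max (lo p) (lo q) < Num.min (hi p) (hi q))%R].

Definition B0 (T : finType) (e : rel T) : Prop :=
  exists P : T -> segpath,
    (forall v, seg_valid (P v)) /\
    (forall u v, u != v -> (e u v <-> share_edge (P u) (P v))).

(* Main.v *)
Require Import Defs.
From mathcomp Require Import all_boot all_order all_algebra.
From mathcomp Require Import zify.
Set Implicit Arguments. Unset Strict Implicit. Unset Printing Implicit Defensive.

Definition btwn (a b z : nat) := (a < z < b) || (b < z < a).
Definition Bp (a b z : nat) : Prop := (a < z /\ z < b)%coq_nat \/ (b < z /\ z < a)%coq_nat.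
Lemma btwnP a b z : reflect (Bp a b z) (btwn a b z).
Proof. rewrite /btwn /Bp; apply: (iffP idP).
- by case/orP => /andP[/ltP ? /ltP ?]; [left|right].
- by case=> -[/ltP h1 /ltP h2]; rewrite h1 h2 ?orbT. Qed.
Lemma refl_neq (X Y : Prop) x y : reflect X x -> reflect Y y -> (x != y) <-> (X <-> ~Y).
Proof. by case=> hX; case=> hY /=; split => //; tauto. Qed.
Lemma refl_eq (X Y : Prop) x y : reflect X x -> reflect Y y -> (x = y) <-> (X <-> Y).
Proof. by case=> hX; case=> hY /=; split => //; tauto. Qed.

Lemma geoF0 v u w y : v <> u -> v <> w -> v <> y -> u <> w -> u <> y -> w <> y ->
  (Bp v u y <-> Bp v u w) -> (Bp v w y <-> Bp v w u) -> (Bp u w y <-> ~ Bp u w v).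
Proof. rewrite /Bp. intros. lia. Qed.
Lemma geoC1 u v w x y : u <> v -> u <> w -> u <> x -> u <> y -> v <> w -> v <> x -> v <> y -> w <> x -> w <> y -> x <> y ->
  (Bp u w x <-> ~ Bp u w v) -> (Bp u w y <-> ~ Bp u w v) -> (Bp u x y <-> Bp u x w) ->
  (Bp w x u <-> ~ Bp w x y).
Proof. rewrite /Bp. intros. lia. Qed.
Lemma geoC2 u v w x y : u <> v -> u <> w -> u <> x -> u <> y -> v <> w -> v <> x -> v <> y -> w <> x -> w <> y -> x <> y ->
  (Bp u w x <-> ~ Bp u w v) -> (Bp u w y <-> ~ Bp u w v) -> (Bp w x y <-> Bp w x u) ->
  (Bp u x w <-> ~ Bp u x y).
Proof. rewrite /Bp. intros. lia. Qed.
Lemma geoD u v w x y : u <> v -> u <> w -> u <> x -> u <> y -> v <> w -> v <> x -> v <> y -> w <> x -> w <> y -> x <> y ->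
  (Bp u w x <-> ~ Bp u w v) -> (Bp u w y <-> ~ Bp u w v) -> (Bp w x y <-> ~ Bp w x u) ->
  (Bp u x y <-> Bp u x w).
Proof. rewrite /Bp. intros. lia. Qed.

Ltac bridge := repeat match goal with
  | |- is_true (?a != ?b) -> _ => let t := type of a in let t' := eval hnf in t in
        lazymatch t' with nat => move/eqP | bool => move/(refl_neq (btwnP _ _ _) (btwnP _ _ _)) end
  | |- (?a = ?b) -> _ => move/(refl_eq (btwnP _ _ _) (btwnP _ _ _))
  | |- _ -> _ => intro
  end.

Lemma bgeoF0 v u w y : v != u -> v != w -> v != y -> u != w -> u != y -> w != y ->
  btwn v u y = btwn v u w -> btwn v w y = btwn v w u -> btwn u w y != btwn u w v.
Proof. bridge. apply/(refl_neq (btwnP _ _ _) (btwnP _ _ _)); by apply: geoF0. Qed.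
Lemma bgeoC1 u v w x y : u != v -> u != w -> u != x -> u != y -> v != w -> v != x -> v != y -> w != x -> w != y -> x != y ->
  btwn u w x != btwn u w v -> btwn u w y != btwn u w v -> btwn u x y = btwn u x w -> btwn w x u != btwn w x y.
Proof. bridge. apply/(refl_neq (btwnP _ _ _) (btwnP _ _ _)); by apply: (geoC1 (v:=v)). Qed.
Lemma bgeoC2 u v w x y : u != v -> u != w -> u != x -> u != y -> v != w -> v != x -> v != y -> w != x -> w != y -> x != y ->
  btwn u w x != btwn u w v -> btwn u w y != btwn u w v -> btwn w x y = btwn w x u -> btwn u x w != btwn u x y.
Proof. bridge. apply/(refl_neq (btwnP _ _ _) (btwnP _ _ _)); by apply: (geoC2 (v:=v)). Qed.
Lemma bgeoD u v w x y : u != v -> u != w -> u != x -> u != y -> v != w -> v != x -> v != y -> w != x -> w != y -> x != y ->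
  btwn u w x != btwn u w v -> btwn u w y != btwn u w v -> btwn w x y != btwn w x u -> btwn u x y = btwn u x w.
Proof. bridge. apply/(refl_eq (btwnP _ _ _) (btwnP _ _ _)); by apply: (geoD (v:=v)). Qed.

Lemma share_ovl (a b c d : nat) : a < b -> c < d ->
  share_edge (SegPath true 0 a b) (SegPath true 0 c d) = (a < d) && (c < b).
Proof. move=> h1 h2; rewrite /share_edge /=. lia. Qed.

Lemma ovl_pos {a b c d : int} : (Num.max a b < Num.min c d)%R -> (a < d)%R /\ (b < c)%R.
Proof. lia. Qed.
Lemma ovl_neg {a b c d : int} : (a < c)%R -> (b < d)%R -> ~~ (Num.max a b < Num.min c d)%R -> (c <= b)%R \/ (d <= a)%R.
Proof. lia. Qed.
Lemma interval_3sun {l0 l1 l2 l3 l4 l5 h0 h1 h2 h3 h4 h5 : int} :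
  (l0 < h1)%R /\ (l1 < h0)%R -> (l0 < h2)%R /\ (l2 < h0)%R -> (l1 < h2)%R /\ (l2 < h1)%R ->
  (l0 < h3)%R /\ (l3 < h0)%R -> (l1 < h3)%R /\ (l3 < h1)%R -> (l1 < h4)%R /\ (l4 < h1)%R ->
  (l2 < h4)%R /\ (l4 < h2)%R -> (l2 < h5)%R /\ (l5 < h2)%R -> (l0 < h5)%R /\ (l5 < h0)%R ->
  (h3 <= l4)%R \/ (h4 <= l3)%R -> (h3 <= l5)%R \/ (h5 <= l3)%R -> (h4 <= l5)%R \/ (h5 <= l4)%R ->
  (h2 <= l3)%R \/ (h3 <= l2)%R -> (h0 <= l4)%R \/ (h4 <= l0)%R -> (h1 <= l5)%R \/ (h5 <= l1)%R ->
  (l3 < h3)%R -> (l4 < h4)%R -> (l5 < h5)%R -> False.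
Proof. lia. Qed.

Lemma B0_noS3 (T : finType) (e : rel T) : B0 e -> ~ has_induced_S3 e.
Proof.
case=> P [Pv HP] [f [finj Hf]].
pose Q i := P (f i).
have sh i j : i != j -> share_edge (Q i) (Q j) = S3 i j.
  move=> ij; rewrite -Hf; apply/idP/idP => h; apply/(HP (f i) (f j)) => //;
  by apply: contra ij => /eqP/finj ->.
pose o0 := @Ordinal 6 0 isT. pose o1 := @Ordinal 6 1 isT. pose o2 := @Ordinal 6 2 isT.
pose o3 := @Ordinal 6 3 isT. pose o4 := @Ordinal 6 4 isT. pose o5 := @Ordinal 6 5 isT.
have s01 : share_edge (Q o0) (Q o1) by rewrite sh.
have s02 : share_edge (Q o0) (Q o2) by rewrite sh.
have s12 : share_edge (Q o1) (Q o2) by rewrite sh.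
have s03 : share_edge (Q o0) (Q o3) by rewrite sh.
have s13 : share_edge (Q o1) (Q o3) by rewrite sh.
have s14 : share_edge (Q o1) (Q o4) by rewrite sh.
have s24 : share_edge (Q o2) (Q o4) by rewrite sh.
have s25 : share_edge (Q o2) (Q o5) by rewrite sh.
have s05 : share_edge (Q o0) (Q o5) by rewrite sh.
have n34 : ~~ share_edge (Q o3) (Q o4) by rewrite sh.
have n35 : ~~ share_edge (Q o3) (Q o5) by rewrite sh.
have n45 : ~~ share_edge (Q o4) (Q o5) by rewrite sh.
have n23 : ~~ share_edge (Q o2) (Q o3) by rewrite sh.
have n04 : ~~ share_edge (Q o0) (Q o4) by rewrite sh.
have n15 : ~~ share_edge (Q o1) (Q o5) by rewrite sh.
have v0 := Pv (f o0); have v1 := Pv (f o1); have v2 := Pv (f o2).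
have v3 := Pv (f o3); have v4 := Pv (f o4); have v5 := Pv (f o5).
rewrite /seg_valid in v0 v1 v2 v3 v4 v5.
move: s01 s02 s03 s14 s25 => /and3P[/eqP h1 /eqP l1 t01] /and3P[/eqP h2 /eqP l2 t02]
  /and3P[/eqP h3 /eqP l3 t03] /and3P[/eqP h4 /eqP l4 t14] /and3P[/eqP h5 /eqP l5 t25].
rewrite -h1 -l1 in h4 l4; rewrite -h2 -l2 in h5 l5.
move: s12 s13 s24 s05 n34 n35 n45 n23 n04 n15.
rewrite /share_edge -h1 -h2 -h3 -h4 -h5 -l1 -l2 -l3 -l4 -l5 !eqxx !andTb => t12 t13 t24 t05 u34 u35 u45 u23 u04 u15.
apply: (interval_3sun (ovl_pos t01) (ovl_pos t02) (ovl_pos t12) (ovl_pos t03) (ovl_pos t13)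
  (ovl_pos t14) (ovl_pos t24) (ovl_pos t25) (ovl_pos t05) (ovl_neg _ _ u34) (ovl_neg _ _ u35)
  (ovl_neg _ _ u45) (ovl_neg _ _ u23) (ovl_neg _ _ u04) (ovl_neg _ _ u15)) => //.
Qed.

Section Tri.
Variables (T : finType) (e : rel T).
Hypothesis esym : symmetric e.
Hypothesis eirr : irreflexive e.

Lemma negb_eq_bool (x y : bool) : x != y -> x = ~~ y.
Proof. by case: x; case: y. Qed.
Lemma eq_bool (x y : bool) : x == y -> x = y.
Proof. by move/eqP. Qed.

Ltac purge :=
  repeat match goal with
  | H : is_true (~~ (?x == ?y)) |- _ => lazymatch type of x with bool => move/negb_eq_bool: H => H end
  | H : is_true (?x == ?y) |- _ => lazymatch type of x with bool => move/eq_bool: H => H end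
  | H : ?b = false |- _ => move/negbT: H => H
  | H : is_true (@in_mem _ _ _) |- _ => clear H
  | H : is_true (~~ (@in_mem _ _ _)) |- _ => clear H
  | H : is_true (e _ _) |- _ => clear H
  | H : is_true (~~ e _ _) |- _ => clear H
  | H : is_true (?x != ?y) |- _ => let t := type of x in let t' := eval hnf in t in
       lazymatch t' with nat => fail | bool => fail | _ => clear H end
  | H : ?x = ?y |- _ => let t := type of x in let t' := eval hnf in t in
       lazymatch t' with nat => fail | bool => fail | _ => clear H end
  | H : forall _ : ?A, _ |- _ => lazymatch type of A with Prop => fail | _ => clear H end
  | H : injective _ |- _ => clear H
  | H : symmetric _ |- _ => clear H
  | H : irreflexive _ |- _ => clear H
  end.
Ltac nlia := intros; purge; first [lia | exfalso; lia].

Definition Pc (p : T -> nat) a b c d := (p a < p c) && (p c < p b) && (p b < p d).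
Definition cross p a b c d := [|| Pc p a b c d, Pc p b a c d, Pc p a b d c, Pc p b a d c,
   Pc p c d a b, Pc p d c a b, Pc p c d b a | Pc p d c b a].
Definition btw (p : T -> nat) a b z := btwn (p a) (p b) (p z).

Definition OP p (S : {set T}) := forall a b c d : T, a \in S -> b \in S -> c \in S -> d \in S ->
  e a b -> e c d -> ~~ cross p a b c d.
Definition TRI p (S : {set T}) := forall a b : T, a \in S -> b \in S -> a != b -> ~~ e a b ->
  exists c d, [/\ c \in S, d \in S, e c d & cross p a b c d].

Lemma pne (p : T -> nat) (Hinj : injective p) (x y : T) : x != y -> p x != p y.
Proof. by rewrite (inj_eq Hinj). Qed.

Lemma edge_ne a b : e a b -> a != b.
Proof. by apply: contraTneq => ->; rewrite eirr. Qed.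

Lemma OP_sub p (S S' : {set T}) : S' \subset S -> OP p S -> OP p S'.
Proof.
move=> /subsetP sub H a b c d aS bS cS dS; apply: H; exact: sub.
Qed.

Lemma cross_lt p a b c d : p a < p b -> cross p a b c d ->
  (p a < p c < p b) && ((p d < p a) || (p b < p d)) || (p a < p d < p b) && ((p c < p a) || (p b < p c)).
Proof. rewrite /cross /Pc; nlia. Qed.

Lemma cross_in p a b c d : p a < p c < p b -> (p d < p a) || (p b < p d) -> cross p a b c d.
Proof.
move=> h1 /orP[] h2; rewrite /cross /Pc.
- by apply/orP; right; apply/orP; right; apply/orP; right; apply/orP; right;
     apply/orP; right; apply/orP; left; nlia.
- by apply/orP; left; nlia.
Qed.

Lemma crossS p a b c d : cross p a b c d = cross p c d a b.
Proof. by rewrite /cross; do 8 case: (Pc _ _ _ _ _). Qed.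
Lemma crossC p a b c d : cross p a b c d = cross p b a c d.
Proof. by rewrite /cross; do 8 case: (Pc _ _ _ _ _). Qed.
Lemma crossC2 p a b c d : cross p a b c d = cross p a b d c.
Proof. by rewrite /cross; do 8 case: (Pc _ _ _ _ _). Qed.

Lemma btwC p a b z : btw p a b z = btw p b a z.
Proof. by rewrite /btw /btwn orbC. Qed.

Lemma boundary p (S : {set T}) (a b : T) : injective p -> TRI p S -> a \in S -> b \in S -> a != b ->
  (forall z, z \in S -> ~~ btw p a b z) \/
  (forall z, z \in S -> [\/ z = a, z = b | btw p a b z]) -> e a b.
Proof.
move=> Hinj tri aS bS ab H; case: (boolP (e a b)) => // nab.
have [c [d [cS dS ecd cr]]] := tri a b aS bS ab nab.
have pab := pne Hinj ab.
have [lt|gt] : p a < p b \/ p b < p a by nlia.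
- have := cross_lt lt cr.
  case: H => H.
    by have := H c cS; have := H d dS; rewrite /btw /btwn; nlia.
  have := H c cS; have := H d dS; rewrite /btw /btwn.
  by case=> [->|->|?]; case=> [->|->|?]; nlia.
- rewrite crossC in cr; have := cross_lt gt cr.
  case: H => H.
    by have := H c cS; have := H d dS; rewrite /btw /btwn; nlia.
  have := H c cS; have := H d dS; rewrite /btw /btwn.
  by case=> [->|->|?]; case=> [->|->|?]; nlia.
Qed.

Lemma tri_in p (S : {set T}) (a b z : T) : injective p -> OP p S -> TRI p S -> a \in S -> b \in S -> z \in S ->
  e a b -> p a < p z < p b -> exists k, [/\ k \in S, p a < p k < p b, e a k & e k b].
Proof.
move=> Hinj op tri aS bS zS eab hz.
case: (@arg_minnP _ z (fun y => (y \in S) && (p a < p y < p b)) p); first by rewrite zS.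
move=> z0 /andP[z0S hz0] minz0.
have eaz0 : e a z0.
  apply: (boundary Hinj tri aS z0S); first by apply/eqP => E; move: hz0; rewrite E; nlia.
  left => y yS; apply/negP => hb.
  have : p a < p y < p b -> p z0 <= p y by move=> h; apply: minz0; rewrite yS h.
  move: hb; rewrite /btw /btwn; nlia.
case: (@arg_maxnP _ z0 (fun y => [&& y \in S, p a < p y < p b & e a y]) p).
  by rewrite z0S hz0 eaz0.
move=> k /and3P[kS hk eak] maxk.
exists k; split=> //.
case: (boolP (e k b)) => // nkb.
have kb : k != b by apply/eqP => E; move: hk; rewrite E; nlia.
have [c [d [cS dS ecd cr]]] := tri k b kS bS kb nkb.
have h1 := op a b c d aS bS cS dS eab ecd.
have h2 := op a k c d aS kS cS dS eak ecd.
have h3 : p d = p a -> p a < p c < p b -> p c <= p k.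
  move=> /Hinj da hc; subst d; apply: maxk; by rewrite cS hc esym.
have h4 : p c = p a -> p a < p d < p b -> p d <= p k.
  move=> /Hinj da hc; subst c; apply: maxk; by rewrite dS hc.
have hkb : p k < p b by nlia.
have := cross_lt hkb cr => /orP[] /andP[hc hd].
- have [ed|[ed|ed]] : (p d < p a \/ p b < p d) \/ p d = p a \/ p a < p d < p k by nlia.
  + by exfalso; move/negP: h1; apply; apply: cross_in; nlia.
  + by have := h3 ed; nlia.
  + by exfalso; move/negP: h2; apply; rewrite crossC2; apply: cross_in; nlia.
- have [ed|[ed|ed]] : (p c < p a \/ p b < p c) \/ p c = p a \/ p a < p c < p k by nlia.
  + by exfalso; move/negP: h1; apply; rewrite crossC2; apply: cross_in; nlia.
  + by have := h4 ed; nlia.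
  + by exfalso; move/negP: h2; apply; apply: cross_in; nlia.
Qed.

Ltac pick := rewrite /cross;
  repeat (first [ apply/orP; left; rewrite /Pc; nlia | apply/orP; right ]); rewrite /Pc; nlia.

Lemma Pc_rot N r (p q : T -> nat) a b c d : (forall z, p z < N) -> r <= N ->
  (forall z, q z = if p z + r < N then p z + r else p z + r - N) ->
  Pc p a b c d -> cross q a b c d.
Proof.
move=> HN hr hq h.
have rw z : (q z = p z + r /\ p z + r < N) \/ (q z = p z + r - N /\ N <= p z + r).
  by rewrite hq; case: ifP => H; [left|right]; split => //; nlia.
move: h; rewrite /Pc => h.
have := HN a; have := HN b; have := HN c; have := HN d.
case: (rw a) => -[ha ha']; case: (rw b) => -[hb hb']; case: (rw c) => -[hc hc'];
  case: (rw d) => -[hd hd'] => *; first [exfalso; nlia | pick].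
Qed.

Ltac crossfit h := first [exact h | rewrite crossC; exact h | rewrite crossC2; exact h
  | rewrite crossC crossC2; exact h ].
Ltac crossfit2 h := first [crossfit h | rewrite crossS; crossfit h].

Lemma cross_rot_imp N r (p q : T -> nat) a b c d : (forall z, p z < N) -> r <= N ->
  (forall z, q z = if p z + r < N then p z + r else p z + r - N) ->
  cross p a b c d -> cross q a b c d.
Proof.
move=> HN hr hq; rewrite {1}/cross.
do 7 (case/orP=> [h|]; first by have h' := Pc_rot HN hr hq h; crossfit2 h').
move=> h; have h' := Pc_rot HN hr hq h; crossfit2 h'.
Qed.

Lemma cross_rot N r (p q : T -> nat) a b c d : (forall z, p z < N) -> r <= N ->
  (forall z, q z = if p z + r < N then p z + r else p z + r - N) ->
  cross q a b c d = cross p a b c d.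
Proof.
move=> HN hr hq; apply/idP/idP; last exact: (cross_rot_imp HN hr hq).
have HN' z : q z < N by rewrite hq; have := HN z; case: ifP => *; nlia.
apply: (cross_rot_imp (r := N - r) HN') => [|z]; first nlia.
rewrite hq; have := HN z; case: (boolP (p z + r < N)) => h1; rewrite ?h1 ?(negbTE h1); case: ifP => h2; nlia.
Qed.

Lemma rot_props N r (p q : T -> nat) (S : {set T}) : (forall z, p z < N) -> r <= N ->
  (forall z, q z = if p z + r < N then p z + r else p z + r - N) ->
  injective p -> OP p S -> TRI p S -> [/\ injective q, OP q S & TRI q S].
Proof.
move=> HN hr hq inj op tri; split.
- move=> x y; rewrite !hq => h; apply: inj; move: h; have := HN x; have := HN y.
  by case: ifP => h1; case: ifP => h2 => *; nlia.
- move=> a b c d aS bS cS dS eab ecd; rewrite (cross_rot _ _ _ _ HN hr hq).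
  exact: op.
- move=> a b aS bS ab nab; have [c [d [cS dS ecd cr]]] := tri a b aS bS ab nab.
  by exists c, d; rewrite (cross_rot _ _ _ _ HN hr hq).
Qed.

Lemma boundN (p : T -> nat) : exists N, forall z, p z < N.
Proof.
exists (\max_(z : T) p z).+1 => z; rewrite ltnS; exact: (leq_bigmax z).
Qed.

Lemma tri_out p (S : {set T}) (a b z : T) : injective p -> OP p S -> TRI p S -> a \in S -> b \in S -> z \in S ->
  e a b -> p a < p b -> (p z < p a) || (p b < p z) ->
  exists k, [/\ k \in S, (p k < p a) || (p b < p k), e a k & e k b].
Proof.
move=> Hinj op tri aS bS zS eab hab hz.
have [N HN] := boundN p.
pose q z := if p z + (N - p b) < N then p z + (N - p b) else p z + (N - p b) - N.
have hq : forall z, q z = if p z + (N - p b) < N then p z + (N - p b) else p z + (N - p b) - N by [].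
have [qinj qop qtri] := rot_props (S:=S) HN (leq_subr _ _) hq Hinj op tri.
have rw y : (q y = p y + (N - p b) /\ p y + (N - p b) < N) \/ (q y = p y + (N - p b) - N /\ N <= p y + (N - p b)).
  by rewrite hq; case: ifP => H; [left|right]; split => //; nlia.
have hzq : q b < q z < q a.
  have := HN a; have := HN b; have := HN z.
  case: (rw a) => -[? ?]; case: (rw b) => -[? ?]; case: (rw z) => -[? ?] => *; nlia.
have eba : e b a by rewrite esym.
have [k [kS hk ebk eka]] := tri_in qinj qop qtri bS aS zS eba hzq.
exists k; split => //; last by rewrite esym.
  have := HN a; have := HN b; have := HN k; move: hk.
  by case: (rw a) => -[? ?]; case: (rw b) => -[? ?]; case: (rw k) => -[? ?] => *; nlia.
by rewrite esym.
Qed.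

Lemma cross_btw p a b c d : p c != p a -> p c != p b -> p d != p a -> p d != p b ->
  btw p a b c != btw p a b d -> cross p a b c d.
Proof.
move=> h1 h2 h3 h4 h.
have [lt|gt] : p a < p b \/ p b < p a by move: h; rewrite /btw /btwn; nlia.
- case: (boolP (p a < p c < p b)) => hc.
  + apply: cross_in => //; move: h; rewrite /btw /btwn; nlia.
  + rewrite crossC2; apply: cross_in; move: h hc; rewrite /btw /btwn; nlia.
- rewrite crossC; case: (boolP (p b < p c < p a)) => hc.
  + apply: cross_in => //; move: h; rewrite /btw /btwn; nlia.
  + rewrite crossC2; apply: cross_in; move: h hc; rewrite /btw /btwn; nlia.
Qed.

Lemma tri_side p (S : {set T}) (a b z : T) : injective p -> OP p S -> TRI p S -> a \in S -> b \in S -> z \in S ->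
  e a b -> p z != p a -> p z != p b ->
  exists k, [/\ k \in S, e a k, e k b, (p k != p a) && (p k != p b) & btw p a b k = btw p a b z].
Proof.
move=> Hinj op tri aS bS zS eab hza hzb.
have hab := pne Hinj (edge_ne eab).
have gen : forall a b, a \in S -> b \in S -> e a b -> p z != p a -> p z != p b -> p a < p b ->
  exists k, [/\ k \in S, e a k, e k b, (p k != p a) && (p k != p b) & btw p a b k = btw p a b z].
  move=> a1 b1 a1S b1S ea hza1 hzb1 hab1.
  case: (boolP (p a1 < p z < p b1)) => hz.
  - have [k [kS hk eak ekb]] := tri_in Hinj op tri a1S b1S zS ea hz.
    by exists k; split => //; rewrite /btw /btwn; try (apply/andP; split); nlia.
  - have hz' : (p z < p a1) || (p b1 < p z) by nlia.
    have [k [kS hk eak ekb]] := tri_out Hinj op tri a1S b1S zS ea hab1 hz'.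
    by exists k; split => //; rewrite /btw /btwn; try (apply/andP; split); nlia.
have [lt|gt] : p a < p b \/ p b < p a by nlia.
  exact: gen.
have eba : e b a by rewrite esym.
have [k [kS ebk eka /andP[h1 h2] h3]] := gen b a bS aS eba hzb hza gt.
by exists k; split; [done | rewrite esym | rewrite esym | rewrite h1 h2 | rewrite btwC h3 btwC].
Qed.

Definition ear (S : {set T}) v u w := [/\ v \in S, u \in S, w \in S, e v u &
  [/\ e v w, e u w & forall y, y \in S -> e v y -> (y == u) || (y == w)]].

Lemma ear_sym S v u w : ear S v u w -> ear S v w u.
Proof.
case=> vS uS wS evu [evw euw nb]; split => //; split => //; first by rewrite esym.
by move=> y yS /(nb y yS); rewrite orbC.
Qed.

Lemma ear_side1 p S v u w z : injective p -> OP p S -> TRI p S -> ear S v u w ->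
  z \in S -> z != v -> z != u -> z != w -> btw p v u z = btw p v u w.
Proof.
move=> Hinj op tri [vS uS wS evu [evw euw nb]] zS zv zu zw.
apply/eqP; case: (boolP (btw p v u z == btw p v u w)) => // hne.
have [k [kS evk eku /andP[h1 h2] h3]] := tri_side Hinj op tri vS uS zS evu (pne Hinj zv) (pne Hinj zu).
case/orP: (nb k kS evk) => /eqP ek; subst k; first by move: h2; rewrite eqxx.
by move: hne; rewrite -h3 eqxx.
Qed.

Lemma ear_fact p S v u w y : injective p -> OP p S -> TRI p S -> ear S v u w ->
  y \in S -> y != v ->
  p y = p u \/ p y = p w \/ ((btw p v u y = btw p v u w) /\ (btw p v w y = btw p v w u)).
Proof.
move=> Hinj op tri E yS yv.
case: (eqVneq y u) => [->|yu]; first by left.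
case: (eqVneq y w) => [->|yw]; first by right; left.
right; right; split; first exact: (ear_side1 Hinj op tri E).
exact: (ear_side1 Hinj op tri (ear_sym E)).
Qed.

Lemma ear_nocross p S v u w a b : injective p -> OP p S -> TRI p S -> ear S v u w ->
  a \in S -> b \in S -> a != v -> b != v -> ~~ cross p a b v u.
Proof.
move=> Hinj op tri E aS bS av bv; apply/negP => cr.
have [vS uS wS evu [evw euw nb]] := E.
have hvu := pne Hinj (edge_ne evu).
have hvw := pne Hinj (edge_ne evw).
have huw := pne Hinj (edge_ne euw).
rewrite crossS in cr.
have Fa := ear_fact Hinj op tri E aS av.
have Fb := ear_fact Hinj op tri E bS bv.
have [lt|gt] : p v < p u \/ p u < p v by nlia.
- have := cross_lt lt cr; clear cr; move: Fa Fb; rewrite /btw /btwn; nlia.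
- rewrite crossC in cr; have := cross_lt gt cr; clear cr; move: Fa Fb; rewrite /btw /btwn; nlia.
Qed.

Lemma TRI_del p S v u w : injective p -> OP p S -> TRI p S -> ear S v u w -> TRI p (S :\ v).
Proof.
move=> Hinj op tri E a b; rewrite !in_setD1 => /andP[av aS] /andP[bv bS] ab nab.
have [vS uS wS evu [evw euw nb]] := E.
have [c [d [cS dS ecd cr]]] := tri a b aS bS ab nab.
case: (eqVneq c v) => [cv|cv].
  subst c; case/orP: (nb d dS ecd) => /eqP dE; subst d.
    by move: cr; rewrite (negbTE (ear_nocross Hinj op tri E aS bS av bv)).
  by move: cr; rewrite (negbTE (ear_nocross Hinj op tri (ear_sym E) aS bS av bv)).
case: (eqVneq d v) => [dv|dv].
  subst d; have evc : e v c by rewrite esym.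
  rewrite crossC2 in cr.
  case/orP: (nb c cS evc) => /eqP cE; subst c.
    by move: cr; rewrite (negbTE (ear_nocross Hinj op tri E aS bS av bv)).
  by move: cr; rewrite (negbTE (ear_nocross Hinj op tri (ear_sym E) aS bS av bv)).
by exists c, d; rewrite !in_setD1 cv dv cS dS.
Qed.

Ltac pn Hinj := apply: (pne Hinj); first [done | by rewrite eq_sym | by apply: edge_ne
   | by rewrite eq_sym; apply: edge_ne].

Lemma ear_F0 p S v u w y : injective p -> OP p S -> TRI p S -> ear S v u w ->
  y \in S -> y != v -> y != u -> y != w -> btw p u w y != btw p u w v.
Proof.
move=> Hinj op tri E yS yv yu yw.
have h1 := ear_side1 Hinj op tri E yS yv yu yw.
have h2 := ear_side1 Hinj op tri (ear_sym E) yS yv yw yu.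
have [vS uS wS evu [evw euw nb]] := E.
by apply: (bgeoF0 _ _ _ _ _ _ h1 h2); pn Hinj.
Qed.

Definition S3map (a0 a1 a2 a3 a4 a5 : T) (i : 'I_6) : T := nth a0 [:: a0; a1; a2; a3; a4; a5] i.

Lemma build_S3 (x1 x2 x3 y1 y2 y3 : T) (p : T -> nat) :
  injective p ->
  uniq [:: p x1; p x2; p x3; p y1; p y2; p y3] ->
  e x1 x2 -> e x1 x3 -> e x2 x3 -> e x1 y1 -> e x2 y1 -> e x2 y2 -> e x3 y2 -> e x3 y3 -> e x1 y3 ->
  ~~ e x3 y1 -> ~~ e x1 y2 -> ~~ e x2 y3 -> ~~ e y1 y2 -> ~~ e y1 y3 -> ~~ e y2 y3 ->
  has_induced_S3 e.
Proof.
move=> Hinj U h12 h13 h23 h1y1 h2y1 h2y2 h3y2 h3y3 h1y3 n1 n2 n3 n4 n5 n6.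
exists (S3map x1 x2 x3 y1 y2 y3); split.
  move=> i j H; apply/val_inj/eqP.
  rewrite -(nth_uniq (p x1) _ _ U) ?ltn_ord //.
  have -> : [:: p x1; p x2; p x3; p y1; p y2; p y3] = map p [:: x1; x2; x3; y1; y2; y3] by [].
  by rewrite !(nth_map x1) ?ltn_ord //; rewrite /S3map in H; rewrite H.
move=> i j; rewrite /S3map /S3.
case: i => [[|[|[|[|[|[|i]]]]]] Hi] //; case: j => [[|[|[|[|[|[|j]]]]]] Hj] //=;
  first [ by rewrite eirr
        | done | by rewrite esym
        | by apply/negbTE | by rewrite esym; apply/negbTE ].
Qed.

Lemma key p S v u w : injective p -> OP p S -> TRI p S -> ~ has_induced_S3 e ->
  ear S v u w -> 4 <= #|S| ->
  exists x, [/\ x \in S :\ v, x != u, x != w, e u x & [/\ e w x &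
    (forall y, y \in S :\ v -> e u y -> (y == w) || (y == x)) \/
    (forall y, y \in S :\ v -> e w y -> (y == u) || (y == x))]].
Proof.
move=> Hinj op tri noS3 E cardS.
have [vS uS wS evu [evw euw nb]] := E.
have vu := edge_ne evu; have vw := edge_ne evw; have uw := edge_ne euw.
have tri' := TRI_del Hinj op tri E.
have op' : OP p (S :\ v) := OP_sub (subD1set S v) op.
have uS' : u \in S :\ v by rewrite in_setD1 uS andbT eq_sym.
have wS' : w \in S :\ v by rewrite in_setD1 wS andbT eq_sym.
have : 0 < #|S :\ v :\ u :\ w|.
  move: cardS; rewrite (cardsD1 v S) (cardsD1 u (S :\ v)) (cardsD1 w (S :\ v :\ u)).
  have uv : u != v by rewrite eq_sym.
  have wv : w != v by rewrite eq_sym.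
  have wu : w != u by rewrite eq_sym.
  rewrite !in_setD1 vS uS wS uv wv wu /=; nlia.
case/card_gt0P => z; rewrite !in_setD1 => /and4P[zw zu zv zS].
have zS' : z \in S :\ v by rewrite in_setD1 zv.
have [x [xS' eux exw /andP[xu xw] hx]] :=
  tri_side Hinj op' tri' uS' wS' zS' euw (pne Hinj zu) (pne Hinj zw).
have xS : x \in S by move: xS'; rewrite in_setD1 => /andP[].
have xv : x != v by move: xS'; rewrite in_setD1 => /andP[].
have xu' : x != u by apply: contra_neq xu => ->.
have xw' : x != w by apply: contra_neq xw => ->.
have Fx := ear_F0 Hinj op tri E xS xv xu' xw'.
have ewx : e w x by rewrite esym.
exists x; split => //; split => //.
case: (boolP [forall y, ((y \in S :\ v) && e u y) ==> (y == w) || (y == x)]) => [/forallP H1|].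
  by left => y yS' euy; have := H1 y; rewrite yS' euy.
move/forallPn => [y1' ]; rewrite negb_imply negb_or => /andP[/andP[y1S' euy1] /andP[y1w y1x]].
case: (boolP [forall y, ((y \in S :\ v) && e w y) ==> (y == u) || (y == x)]) => [/forallP H2|].
  by right => y yS' ewy; have := H2 y; rewrite yS' ewy.
move/forallPn => [y2' ]; rewrite negb_imply negb_or => /andP[/andP[y2S' ewy2] /andP[y2u y2x]].
exfalso; apply: noS3.
have y1S : y1' \in S by move: y1S'; rewrite in_setD1 => /andP[].
have y1v : y1' != v by move: y1S'; rewrite in_setD1 => /andP[].
have y2S : y2' \in S by move: y2S'; rewrite in_setD1 => /andP[].
have y2v : y2' != v by move: y2S'; rewrite in_setD1 => /andP[].
have y1u : y1' != u by rewrite eq_sym; apply: edge_ne.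
have y2w : y2' != w by rewrite eq_sym; apply: edge_ne.
have F1 := ear_F0 Hinj op tri E y1S y1v y1u y1w.
have F2 := ear_F0 Hinj op tri E y2S y2v y2u y2w.
have C1 : btw p u x y1' != btw p u x w.
  apply/negP => /eqP C.
  have := op' w x u y1' wS' xS' uS' y1S' ewx euy1.
  move/negP; apply; apply: cross_btw; try pn Hinj.
  by apply: (bgeoC1 (v := p v) _ _ _ _ _ _ _ _ _ _ Fx F1 C); pn Hinj.
have C2 : btw p w x y2' != btw p w x u.
  apply/negP => /eqP C.
  have := op' u x w y2' uS' xS' wS' y2S' eux ewy2.
  move/negP; apply; apply: cross_btw; try pn Hinj.
  by apply: (bgeoC2 (v := p v) _ _ _ _ _ _ _ _ _ _ Fx F2 C); pn Hinj.
have [y1 [y1S1 euy exy /andP[q1 q2] hy1]] :=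
  tri_side Hinj op' tri' uS' xS' y1S' eux (pne Hinj y1u) (pne Hinj y1x).
have [y2 [y2S1 ewy exy2 /andP[q3 q4] hy2]] :=
  tri_side Hinj op' tri' wS' xS' y2S' ewx (pne Hinj y2w) (pne Hinj y2x).
rewrite -hy1 in C1; rewrite -hy2 in C2.
have y1S0 : y1 \in S by move: y1S1; rewrite in_setD1 => /andP[].
have y1v0 : y1 != v by move: y1S1; rewrite in_setD1 => /andP[].
have y2S0 : y2 \in S by move: y2S1; rewrite in_setD1 => /andP[].
have y2v0 : y2 != v by move: y2S1; rewrite in_setD1 => /andP[].
have y1w0 : y1 != w by apply: contraNneq C1 => ->.
have y2u0 : y2 != u by apply: contraNneq C2 => ->.
have y1u0 : y1 != u by apply: contra_neq q1 => ->.
have y2w0 : y2 != w by apply: contra_neq q3 => ->.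
have y1x0 : y1 != x by apply: contra_neq q2 => ->.
have y2x0 : y2 != x by apply: contra_neq q4 => ->.
have G2 := ear_F0 Hinj op tri E y2S0 y2v0 y2u0 y2w0.
have D2 : btw p u x y2 = btw p u x w.
  by apply: (bgeoD (v := p v) _ _ _ _ _ _ _ _ _ _ Fx G2 C2); pn Hinj.
have y1y2 : y1 != y2 by apply: contraNneq C1 => ->; rewrite D2.
have nvx : ~~ e v x by apply/negP => /(nb x xS); rewrite (negbTE xu') (negbTE xw').
have nvy1 : ~~ e v y1 by apply/negP => /(nb y1 y1S0); rewrite (negbTE y1u0) (negbTE y1w0).
have nvy2 : ~~ e v y2 by apply/negP => /(nb y2 y2S0); rewrite (negbTE y2u0) (negbTE y2w0).
have nuy2 : ~~ e u y2.
  apply/negP => h; have := op' w x u y2 wS' xS' uS' y2S1 ewx h.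
  by move/negP; apply; apply: cross_btw; first [pn Hinj | done | by rewrite eq_sym | by rewrite D2 | by rewrite D2 eq_sym].
have nwy1 : ~~ e w y1.
  apply/negP => h; have := op' u x w y1 uS' xS' wS' y1S1 eux h.
  by move/negP; apply; apply: cross_btw; first [pn Hinj | done | by rewrite eq_sym | by rewrite D2 | by rewrite D2 eq_sym].
have ny1y2 : ~~ e y1 y2.
  apply/negP => h; have := op' u x y1 y2 uS' xS' y1S1 y2S1 eux h.
  by move/negP; apply; apply: cross_btw; first [pn Hinj | done | by rewrite eq_sym | by rewrite D2 | by rewrite D2 eq_sym].
apply: (@build_S3 u w x v y2 y1 p) => //; try by rewrite esym.
rewrite /= !inE !negb_or; repeat (apply/andP; split); first [done | pn Hinj].
Qed.

Lemma ear_exists p (S : {set T}) : injective p -> OP p S -> TRI p S -> 3 <= #|S| ->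
  exists v u w, ear S v u w.
Proof.
move=> Hinj op tri cardS.
have [a1 a1S] : exists a1, a1 \in S by apply/card_gt0P; nlia.
case: (@arg_minnP _ a1 (fun y => y \in S) p a1S) => amin aminS minP.
case: (@arg_maxnP _ a1 (fun y => y \in S) p a1S) => amax amaxS maxP.
have : 0 < #|S :\ amin :\ amax|.
  move: cardS; rewrite (cardsD1 amin S) (cardsD1 amax (S :\ amin)) aminS in_setD1 amaxS andbT.
  by case: (amax != amin) => /=; nlia.
case/card_gt0P => z; rewrite !in_setD1 => /and3P[zmax zmin zS].
have h1 := minP z zS; have h2 := maxP z zS.
have pz1 := pne Hinj zmin; have pz2 := pne Hinj zmax.
have hz : p amin < p z < p amax by nlia.
have mm : amin != amax by apply/eqP => E; move: hz; rewrite E; nlia.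
have emm : e amin amax.
  apply: (boundary Hinj tri aminS amaxS mm); right => y yS.
  case: (eqVneq y amin) => [->|ya]; first by constructor 1.
  case: (eqVneq y amax) => [->|yb]; first by constructor 2.
  constructor 3; have := minP y yS; have := maxP y yS.
  have := pne Hinj ya; have := pne Hinj yb; rewrite /btw /btwn; nlia.
pose Q (q : T * T) := [&& q.1 \in S, q.2 \in S, e q.1 q.2, p q.1 < p q.2 &
   [exists y, (y \in S) && (p q.1 < p y < p q.2)]].
have Q0 : Q (amin, amax).
  rewrite /Q /= aminS amaxS emm /=; apply/andP; split; first by nlia.
  by apply/existsP; exists z; rewrite zS hz.
case: (@arg_minnP _ (amin, amax) Q (fun q => p q.2 - p q.1) Q0) => [[a b]].
rewrite /Q /= => /and5P[aS bS eab hab /existsP[y /andP[yS hy]]] minQ.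
have [k [kS hk eak ekb]] := tri_in Hinj op tri aS bS yS eab hy.
have emp1 : forall y, y \in S -> ~~ (p a < p y < p k).
  move=> y' y'S; apply/negP => hy'.
  have := minQ (a, k); rewrite /Q /= aS kS eak /=.
  have -> : [exists y0, (y0 \in S) && (p a < p y0 < p k)] by apply/existsP; exists y'; rewrite y'S hy'.
  have -> : p a < p k by nlia.
  move=> /(_ isT); nlia.
have emp2 : forall y, y \in S -> ~~ (p k < p y < p b).
  move=> y' y'S; apply/negP => hy'.
  have := minQ (k, b); rewrite /Q /= kS bS ekb /=.
  have -> : [exists y0, (y0 \in S) && (p k < p y0 < p b)] by apply/existsP; exists y'; rewrite y'S hy'.
  have -> : p k < p b by nlia.
  move=> /(_ isT); nlia.
exists k, a, b; split => //; first by rewrite esym.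
split => // y' y'S eky.
case: (eqVneq y' a) => [_|ya] //.
case: (eqVneq y' b) => [_|yb] //.
exfalso.
have yk : y' != k by rewrite eq_sym; apply: edge_ne.
have := emp1 y' y'S; have := emp2 y' y'S.
have := pne Hinj ya; have := pne Hinj yb; have := pne Hinj yk.
move=> n1 n2 n3 m2 m1.
have [o|i] : (p y' < p a) || (p b < p y') \/ (p a < p y' < p b) by nlia.
- have := op a b k y' aS bS kS y'S eab eky.
  by move/negP; apply; apply: cross_in.
- nlia.
Qed.

Definition ovl (I : T -> nat * nat) a b := ((I a).1 < (I b).2) && ((I b).1 < (I a).2).

Lemma ovlC I a b : ovl I a b = ovl I b a.
Proof. by rewrite /ovl andbC. Qed.

Lemma main p : injective p -> ~ has_induced_S3 e -> forall n (S : {set T}), #|S| = n -> 3 <= n ->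
  OP p S -> TRI p S -> forall v u w, ear S v u w ->
  exists I : T -> nat * nat, exists M,
    [/\ forall z, (I z).1 < (I z).2,
        forall a b, a \in S -> b \in S -> a != b -> e a b = ovl I a b,
        [/\ (I v).2 = M, (I u).2 = M & (I w).2 = M] & forall z, z \in S -> (I z).2 <= M].
Proof.
move=> Hinj noS3; elim=> [|n IH] S cardS n3 op tri v u w E; first by [].
have [vS uS wS evu [evw euw nb]] := E.
have vu := edge_ne evu; have vw := edge_ne evw; have uw := edge_ne euw.
have uv : u != v by rewrite eq_sym.
have wv : w != v by rewrite eq_sym.
have wu : w != u by rewrite eq_sym.
have cards : #|S| = 3 + #|S :\ v :\ u :\ w|.
  rewrite (cardsD1 v S) (cardsD1 u (S :\ v)) (cardsD1 w (S :\ v :\ u)).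
  by rewrite !in_setD1 vS uS wS uv wv wu.
case: (ltnP n.+1 4) => n4.
  have memS y : y \in S -> [\/ y = v, y = u | y = w].
    move=> yS; case: (eqVneq y v) => [->|yv]; first by constructor 1.
    case: (eqVneq y u) => [->|yu]; first by constructor 2.
    case: (eqVneq y w) => [->|yw]; first by constructor 3.
    have : y \in S :\ v :\ u :\ w by rewrite !in_setD1 yv yu yw yS.
    have -> : S :\ v :\ u :\ w = set0 by apply/cards0_eq; nlia.
    by rewrite inE.
  exists (fun _ => (0, 1)), 1; split => // a b aS bS ab.
  rewrite (_ : ovl _ a b = true) //.
  move: ab; case: (memS a aS) => ->; case: (memS b bS) => -> ab;
    first [by rewrite eqxx in ab | done | by rewrite esym].
have n4' : 3 < #|S| by rewrite cardS.
have [x [xS' xu xw eux [ewx H]]] := key Hinj op tri noS3 E n4'.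
have tri' := TRI_del Hinj op tri E.
have op' : OP p (S :\ v) := OP_sub (subD1set S v) op.
have n3' : 2 < n by nlia.
have cardS' : #|S :\ v| = n by move: cardS; rewrite (cardsD1 v S) vS add1n => -[].
have uS' : u \in S :\ v by rewrite in_setD1 uS uv.
have wS' : w \in S :\ v by rewrite in_setD1 wS wv.
have [I [M [Hval Hrep HuM HwM Hle]]] : exists I : T -> nat * nat, exists M,
    [/\ forall z, (I z).1 < (I z).2,
        forall a b, a \in S :\ v -> b \in S :\ v -> a != b -> e a b = ovl I a b,
        (I u).2 = M, (I w).2 = M & forall z, z \in S :\ v -> (I z).2 <= M].
  case: H => H.
  - have E' : ear (S :\ v) u w x.
      split => //; split => //; by rewrite esym.
    have [I [M [? ? [? ? ?] ?]]] := IH (S :\ v) cardS' n3' op' tri' u w x E'.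
    by exists I, M; split.
  - have E' : ear (S :\ v) w u x.
      split => //; by rewrite esym.
    have [I [M [? ? [? ? ?] ?]]] := IH (S :\ v) cardS' n3' op' tri' w u x E'.
    by exists I, M; split.
pose I' z := if z == v then (M, M.+1) else if (z == u) || (z == w) then ((I z).1, M.+1) else I z.
have I'v : I' v = (M, M.+1) by rewrite /I' eqxx.
have I'o z : z != v -> (I' z).1 = (I z).1 /\ ((I' z).2 = (I z).2 \/ ((I' z).2 = M.+1 /\ (I z).2 = M)).
  move=> zv; rewrite /I' (negbTE zv).
  case: (eqVneq z u) => [->|zu] /=; first by split => //; right.
  case: (eqVneq z w) => [->|zw] /=; first by split => //; right.
  by split => //; left.
have hv b : b \in S -> b != v -> e v b = ovl I' v b.
  move=> bS bv; have bS' : b \in S :\ v by rewrite in_setD1 bv bS.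
  have := Hle b bS'; have := Hval b; rewrite /ovl I'v /=.
  case: (eqVneq b u) => [->|bu]; first by rewrite evu /I' (negbTE uv) eqxx /= HuM; nlia.
  case: (eqVneq b w) => [->|bw]; first by rewrite evw /I' (negbTE wv) eqxx orbT /= HwM; nlia.
  have -> : e v b = false by apply/negbTE/negP => /(nb b bS); rewrite (negbTE bu) (negbTE bw).
  rewrite /I' (negbTE bv) (negbTE bu) (negbTE bw) /=; nlia.
exists I', M.+1; split.
- move=> z; case: (eqVneq z v) => [->|zv]; first by rewrite I'v.
  have [h1 h2] := I'o z zv; have := Hval z; nlia.
- move=> a b aS bS ab.
  case: (eqVneq a v) => [av|av].
    by subst a; apply: hv => //; rewrite eq_sym.
  case: (eqVneq b v) => [bv|bv].
    by subst b; rewrite esym ovlC; apply: hv.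
  have aS' : a \in S :\ v by rewrite in_setD1 av aS.
  have bS' : b \in S :\ v by rewrite in_setD1 bv bS.
  rewrite (Hrep a b aS' bS' ab).
  have [ha1 ha2] := I'o a av; have [hb1 hb2] := I'o b bv.
  have := Hval a; have := Hval b; have := Hle a aS'; have := Hle b bS'.
  rewrite /ovl; nlia.
- split; first by rewrite I'v.
  + by rewrite /I' (negbTE uv) eqxx.
  + by rewrite /I' (negbTE wv) eqxx orbT.
- move=> z zS; case: (eqVneq z v) => [->|zv]; first by rewrite I'v.
  have zS' : z \in S :\ v by rewrite in_setD1 zv zS.
  have [h1 h2] := I'o z zv; have := Hle z zS'; nlia.
Qed.
Lemma B0_of_I (I : T -> nat * nat) : (forall z, (I z).1 < (I z).2) ->
  (forall a b, a != b -> e a b = ovl I a b) -> B0 e.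
Proof.
move=> Hval Hrep.
exists (fun z => SegPath true 0 (I z).1 (I z).2); split.
  move=> z; rewrite /seg_valid /=; have := Hval z; nlia.
move=> a b ab; rewrite Hrep // share_ovl //.
Qed.

Lemma construct (pos : T -> nat) : injective pos ->
  (forall a b c d : T, e a b -> e c d -> ~ (pos a < pos c /\ pos c < pos b /\ pos b < pos d)) ->
  (forall x y : T, x != y -> ~~ e x y -> ~ outerplanar (add_edge e x y)) ->
  ~ has_induced_S3 e -> B0 e.
Proof.
move=> Hinj opd maxl noS3.
have opd' a b c d : e a b -> e c d -> ~~ Pc pos a b c d.
  move=> eab ecd; apply/negP => /andP[/andP[h1 h2] h3]; exact: (opd a b c d eab ecd).
have op : OP pos [set: T].
  move=> a b c d _ _ _ _ eab ecd.
  have eba : e b a by rewrite esym.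
  have edc : e d c by rewrite esym.
  rewrite /cross !negb_or; repeat (apply/andP; split); exact: opd'.
have tri : TRI pos [set: T].
{   move=> a b _ _ ab nab.
  case: (boolP [exists c, exists d, e c d && cross pos a b c d]).
    by case/existsP => c /existsP [d /andP[ecd cr]]; exists c, d; rewrite !inE.
  move=> H; exfalso.
  have noX c d : e c d -> cross pos a b c d -> False.
    by move=> ecd cr; move/existsPn: H => /(_ c) /existsPn /(_ d); rewrite ecd cr.
  apply: (maxl a b ab nab); exists pos; split => // a' b' c' d'.
  rewrite /add_edge => /or3P[h1|/andP[/eqP-> /eqP->]|/andP[/eqP-> /eqP->]]
    /or3P[h2|/andP[/eqP-> /eqP->]|/andP[/eqP-> /eqP->]] [hh1 [hh2 hh3]].
  all: try exact: (opd a' b' c' d' h1 h2).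
  all: try (exfalso; nlia).
  all: first [ apply: (noX _ _ h1) | apply: (noX _ _ h2) ];
    first [ by rewrite crossS /cross /Pc hh1 hh2 hh3 | by rewrite crossS crossC2 /cross /Pc hh1 hh2 hh3
          | by rewrite /cross /Pc hh1 hh2 hh3 | by rewrite crossC /cross /Pc hh1 hh2 hh3 ].
}
case: (leqP 3 #|T|) => cT.
  have cS : 3 <= #|[set: T]| by rewrite cardsT.
  have [v [u [w E]]] := ear_exists Hinj op tri cS.
  have [I [M [Hval Hrep _ _]]] := main Hinj noS3 (erefl _) cS op tri E.
  by apply: (B0_of_I Hval) => a b ab; apply: Hrep; rewrite ?inE.
apply: (B0_of_I (I := fun _ => (0, 1))) => // a b ab.
rewrite (_ : ovl _ a b = true) //.
apply: (boundary Hinj tri _ _ ab); rewrite ?inE //; left => z _.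
case: (eqVneq z a) => [->|za]; first by rewrite /btw /btwn; nlia.
case: (eqVneq z b) => [->|zb]; first by rewrite /btw /btwn; nlia.
have : z \in [set: T] :\ a :\ b by rewrite !in_setD1 za zb inE.
have -> : [set: T] :\ a :\ b = set0.
  apply/cards0_eq; move: cT; rewrite -cardsT (cardsD1 a [set: T]) (cardsD1 b ([set: T] :\ a)).
  by rewrite !in_setD1 !inE eq_sym ab /=; nlia.
by rewrite inE.
Qed.

End Tri.

Theorem theorem4p6 (T : finType) (e : rel T) :
  simple_graph e -> maximal_outerplanar e ->
  (B0 e <-> ~ has_induced_S3 e).
Proof.
move=> [esym eirr] [[pos [inj opd]] maxl]; split; first exact: B0_noS3.
exact: (construct esym eirr inj opd maxl).
Qed.
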